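(* Let $G$ be a finite group and let $\operatorname P$ and $\operatorname R$ be projection operators on the group algebra $\mathbb C G$. If $\operatorname P$ commutes with the projection onto each group element (i.e. onto the span of each basis vector $g\in G$), and $\operatorname R$ commutes with left multiplication by every element of $G$, then $$\|\operatorname{PR}\|^2\le \frac{\operatorname{rank}\operatorname P\cdot\operatorname{rank}\operatorname R}{|G|}.$$
   Context: $\mathbb C G$ is identified with $L^2(G)$ (functions on $G$), with the group elements forming an orthonormal basis; ''projection operator'' means orthogonal projection (self-adjoint idempotent). Left multiplication by $x$ is $[\operatorname L_x f](y)=f(x^{-1}y)$. $\|\cdot\|$ denotes operator norm. *)

(* Defs.v *)
From HB Require Import structures.
From mathcomp Require Import all_boot all_order all_fingroup all_algebra.
From mathcomp Require Import classical_sets reals.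
From mathcomp Require Import complex.
Set Implicit Arguments. Unset Strict Implicit. Unset Printing Implicit Defensive.
Import Order.TTheory GRing.Theory Num.Theory.
Local Open Scope ring_scope.

(* C G = L^2(G) is modelled as column vectors 'cV[R[i]]_#|gT|, where the
   coordinate i corresponds to the group element enum_val i (the group
   elements form the orthonormal standard basis). *)

Section Defs.
Variable R : realType.
Local Notation C := R[i].

Definition adjmx {n} (A : 'M[C]_n) : 'M[C]_n := \matrix_(i, j) (A j i)^*%C.

Definition is_projection {n} (A : 'M[C]_n) : Prop :=
  A *m A = A /\ adjmx A = A.

Definition vnorm {n} (v : 'cV[C]_n) : R :=
  Num.sqrt (\sum_i Normc.normc (v i 0) ^+ 2).

Definition opnorm {n} (A : 'M[C]_n) : R :=
  sup [set vnorm (A *m v) | v in [set v : 'cV[C]_n | vnorm v <= 1]]%classic.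

Variable gT : finGroupType.

(* left multiplication: [L_x f](y) = f(x^-1 y), i.e. L_x e_g = e_{x g} *)
Definition leftmul (x : gT) : 'M[C]_#|gT| :=
  \matrix_(i, j) ((enum_val i == x * enum_val j)%g)%:R.

Definition elt_proj (g : gT) : 'M[C]_#|gT| :=
  delta_mx (enum_rank g) (enum_rank g).

End Defs.

(* Main.v *)
Require Import Defs.
From HB Require Import structures.
From mathcomp Require Import all_boot all_order all_fingroup all_algebra.
From mathcomp Require Import classical_sets reals.
From mathcomp Require Import complex.
From mathcomp Require Import ring lra.
Import Order.TTheory GRing.Theory Num.Theory.
Local Open Scope ring_scope.


Lemma real_CS (R : realFieldType) n (x y : 'I_n -> R) :
  (\sum_i x i * y i) ^+ 2 <= (\sum_i x i ^+ 2) * (\sum_i y i ^+ 2).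
Proof.
set A := \sum_i x i ^+ 2; set B := \sum_i y i ^+ 2; set T := \sum_i x i * y i.
have D0 : 0 <= \sum_i \sum_j (x i * y j - x j * y i) ^+ 2.
  by apply: sumr_ge0 => i _; apply: sumr_ge0 => j _; apply: sqr_ge0.
have E : \sum_i \sum_j (x i * y j - x j * y i) ^+ 2 =
          \sum_i (x i ^+ 2 * B + A * y i ^+ 2 - (2 * (x i * y i)) * T).
  apply: eq_bigr => i _.
  rewrite /A /B /T mulr_sumr mulr_suml mulr_sumr -big_split -sumrB /=.
  by apply: eq_bigr => j _; rewrite !expr2; ring.
rewrite E sumrB big_split /= -mulr_suml -mulr_sumr -mulr_suml -mulr_sumr -/A -/B -/T in D0.
suff : 0 <= 2 * (A * B - T ^+ 2) by rewrite pmulr_rge0 // subr_ge0.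
move: D0; congr (_ <= _); ring.
Qed.


Lemma tr_pid (F : fieldType) n r : (r <= n)%N -> \tr (pid_mx r : 'M[F]_n) = r%:R.
Proof.
move=> rn; rewrite /mxtrace.
under eq_bigr => i _ do rewrite mxE eqxx /=.
rewrite -natr_sum; congr (_%:R).
rewrite -(big_mkord xpredT (fun i => nat_of_bool (i < r)%N)).
rewrite (big_cat_nat (leq0n r) rn) /=.
rewrite [X in (_ + X)%N]big1_seq ?addn0; last first.
  by move=> i /andP[_]; rewrite mem_index_iota => /andP[/leq_gtF ->].
rewrite big_seq_cond (eq_bigr (fun _ => 1%N)); last first.
  by move=> i /andP[]; rewrite mem_index_iota => /andP[_ ->].
by rewrite -big_seq_cond sum_nat_const_nat muln1 subn0.
Qed.

Lemma tr_idem (F : fieldType) n (A : 'M[F]_n) : A *m A = A -> \tr A = (\rank A)%:R.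
Proof.
move=> AA.
have eA := mulmx_ebase A.
set L := col_ebase A in eA; set U := row_ebase A in eA; set r := \rank A in eA *.
have Lu := col_ebase_unit A; have Uu := row_ebase_unit A.
have rn : (r <= n)%N by apply: rank_leq_row.
have key : pid_mx r *m (U *m L) *m pid_mx r = pid_mx r :> 'M_n.
  apply: (can_inj (mulmxK Uu)); apply: (can_inj (mulKmx Lu)).
  rewrite !mulmxA eA -[RHS]AA -!mulmxA; congr (_ *m _); by rewrite mulmxA.
rewrite -eA mxtrace_mulC mulmxA mxtrace_mulC.
rewrite -{1}(@pid_mx_id F n n n r rn) -mulmxA mxtrace_mulC -mulmxA.
rewrite mulmxA key.
exact: tr_pid.
Qed.

Section C.
Variable R : realType.
Local Notation C := R[i].
Local Notation nc := (@Normc.normc R).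

Lemma normcC (z : C) : ((nc z)%:C)%C = `|z|.
Proof. by case: z => a b; rewrite normc_def. Qed.

Lemma nc_ge0 (z : C) : 0 <= nc z.
Proof. by case: z => a b; exact: sqrtr_ge0. Qed.

Lemma normc_sqrC (z : C) : (((nc z) ^+ 2)%:C)%C = z * (z^*)%C.
Proof. by rewrite rmorphXn /= normcC sqr_normc. Qed.

Lemma realC_inj (x y : R) : (x%:C)%C = (y%:C)%C -> x = y.
Proof. by case. Qed.

Lemma nc_sum (I : Type) (r : seq I) (F : I -> C) :
  nc (\sum_(i <- r) F i) <= \sum_(i <- r) nc (F i).
Proof.
apply: (big_ind2 (fun a b => nc a <= b)); first by rewrite Normc.normc0.
  by move=> a b c d h1 h2; apply: le_trans (le_normcD _ _) _; apply: lerD.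
by [].
Qed.

Lemma proj_row n (A : 'M[C]_n) g : is_projection A ->
  ((\sum_h nc (A g h) ^+ 2)%:C)%C = A g g.
Proof.
case=> AA adjA; rewrite rmorph_sum.
transitivity ((A *m adjmx A) g g); last by rewrite adjA AA.
rewrite mxE; apply: eq_bigr => h _; rewrite /adjmx mxE; exact: normc_sqrC.
Qed.


Lemma row_bound n (A : 'M[C]_n) (v : 'cV[C]_n) g :
  nc ((A *m v) g 0) ^+ 2 <= (\sum_h nc (A g h) ^+ 2) * (\sum_h nc (v h 0) ^+ 2).
Proof.
have H := (@real_CS R n (fun h => nc (A g h)) (fun h => nc (v h 0))).
refine (le_trans _ H).
rewrite ler_sqr ?nnegrE ?nc_ge0 ?sumr_ge0 // => [|h _]; last by rewrite mulr_ge0 ?nc_ge0.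
rewrite mxE; apply: le_trans (nc_sum _ _ _) _.
by apply: ler_sum => h _; rewrite Normc.normcM.
Qed.

Lemma sum_delta_r n (F : 'I_n -> C) i : \sum_k F k * (k == i)%:R = F i.
Proof.
rewrite (bigD1 i) //= eqxx mulr1 big1 ?addr0 // => k /negbTE ->; by rewrite mulr0.
Qed.

Lemma sum_delta_l n (F : 'I_n -> C) i : \sum_k (k == i)%:R * F k = F i.
Proof.
rewrite (bigD1 i) //= eqxx mul1r big1 ?addr0 // => k /negbTE ->; by rewrite mul0r.
Qed.

Variable gT : finGroupType.

Lemma mul_leftmul_r (M : 'M[C]_#|gT|) x i j :
  (M *m leftmul R x) i j = M i (enum_rank (x * enum_val j)%g).
Proof.
rewrite mxE -[RHS](sum_delta_r _ (M i)); apply: eq_bigr => k _; rewrite mxE.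
congr (_ * _%:R).
by rewrite -(inj_eq enum_val_inj) enum_rankK.
Qed.

Lemma mul_leftmul_l (M : 'M[C]_#|gT|) x i j :
  (leftmul R x *m M) i j = M (enum_rank (x^-1 * enum_val i)%g) j.
Proof.
rewrite mxE -[RHS](sum_delta_l _ (M^~ j)); apply: eq_bigr => k _; rewrite mxE.
congr (_%:R * _).
by rewrite -(inj_eq enum_val_inj) enum_rankK -[in RHS](inj_eq (mulgI x)) mulKVg eq_sym.
Qed.

End C.

Local Notation nc := (@Normc.normc _).

Theorem corollary1 (R : realType) (gT : finGroupType)
    (P Q : 'M[R[i]]_#|gT|) :
  is_projection P -> is_projection Q ->
  (forall g : gT, P *m elt_proj R g = elt_proj R g *m P) ->
  (forall x : gT, Q *m leftmul R x = leftmul R x *m Q) ->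
  opnorm (P *m Q) ^+ 2 <= ((\rank P * \rank Q)%:R / #|gT|%:R).
Proof.
move=> pP pQ hP hQ.
pose i0 : 'I_#|gT| := enum_rank (1%g : gT).
have n0 : (0 < #|gT|)%N := leq_ltn_trans (leq0n _) (ltn_ord i0).
have Qd : forall i, Q i i = Q i0 i0.
  move=> i; have := congr1 (fun M : 'M[R[i]]_#|gT| => M i i0) (hQ (enum_val i)).
  by rewrite /= mul_leftmul_r mul_leftmul_l /i0 enum_rankK mulg1 enum_valK mulVg.
set c := \sum_h nc (Q i0 h) ^+ 2.
have Qr : forall g, \sum_h nc (Q g h) ^+ 2 = c.
  by move=> g; apply: realC_inj; rewrite !proj_row //; exact: Qd.
have cE : c *+ #|gT| = (\rank Q)%:R.
  apply: realC_inj; rewrite rmorphMn rmorph_nat /= -tr_idem; last by case: pQ.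
  rewrite /mxtrace (eq_bigr (fun _ => Q i0 i0)); last by move=> i _; exact: Qd.
  by rewrite sumr_const card_ord /c proj_row.
have Pd : forall g h, g != h -> P g h = 0.
  move=> g h gh; have := congr1 (fun M : 'M[R[i]]_#|gT| => M g h) (hP (enum_val h)).
  rewrite /elt_proj enum_valK /= !mxE.
  under eq_bigr => k _ do rewrite mxE eqxx andbT.
  under [in RHS]eq_bigr => k _ do rewrite mxE (negbTE gh) /= mul0r.
  by rewrite sum_delta_r big1.
pose p g := nc (P g g) ^+ 2.
have Pr : forall g, \sum_h nc (P g h) ^+ 2 = p g.
  move=> g; rewrite (bigD1 g) //= big1 ?addr0 // => h hg.
  by rewrite Pd 1?eq_sym // Normc.normc0 expr2 mul0r.
have pE : \sum_g p g = (\rank P)%:R.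
  apply: realC_inj; rewrite rmorph_sum rmorph_nat /= -tr_idem; last by case: pP.
  by apply: eq_bigr => g _; rewrite -Pr; exact: proj_row.
have p0 : forall g, 0 <= p g by move=> g; rewrite /p exprn_ge0 // nc_ge0.
set b := ((\rank P * \rank Q)%:R / #|gT|%:R) : R.
have b0 : 0 <= b by rewrite /b divr_ge0 ?ler0n.
have cb : (\rank P)%:R * c = b.
  rewrite /b natrM -cE -[c *+ _]mulr_natr mulrA mulfK //.
  by rewrite pnatr_eq0 -lt0n.
have main : forall v : 'cV[R[i]]_#|gT|, vnorm v <= 1 ->
    vnorm ((P *m Q) *m v) <= Num.sqrt b.
  move=> v; rewrite /vnorm => hv; rewrite ler_sqrt //.
  set S := \sum_h nc (v h 0) ^+ 2 in hv.
  have S0 : 0 <= S by apply: sumr_ge0 => h _; rewrite exprn_ge0 // nc_ge0.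
  have S1 : S <= 1 by rewrite -(sqr_sqrtr S0) exprn_ile1 ?sqrtr_ge0.
  rewrite -mulmxA.
  have H : forall g, nc ((P *m (Q *m v)) g 0) ^+ 2 <= p g * (c * S).
    move=> g; rewrite mxE (bigD1 g) //= big1 ?addr0; last first.
      by move=> h hg; rewrite Pd ?mul0r // eq_sym.
    rewrite Normc.normcM exprMn; apply: (ler_wpM2l (p0 g)).
    rewrite -(Qr g); exact: row_bound.
  apply: le_trans (ler_sum _ (fun g _ => H g)) _.
  rewrite -mulr_suml pE mulrA cb.
  by rewrite ler_piMr.
rewrite /opnorm.
set E := (X in sup X).
have vn0 : forall w : 'cV[R[i]]_#|gT|, 0 <= vnorm w by move=> w; exact: sqrtr_ge0.
have z1 : vnorm (0 : 'cV[R[i]]_#|gT|) <= 1.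
  rewrite /vnorm big1 ?sqrtr0 ?ler01 // => h _.
  by rewrite mxE Normc.normc0 expr2 mul0r.
have Ez : E (vnorm ((P *m Q) *m 0)) by exists 0.
have ub : ubound E (Num.sqrt b) by move=> _ [v hv <-]; exact: main.
have s1 : sup E <= Num.sqrt b by apply: ge_sup => //; exists (vnorm ((P *m Q) *m 0)).
have s0 : 0 <= sup E.
  apply: le_trans (vn0 ((P *m Q) *m 0)) _.
  by apply: ub_le_sup => //; exists (Num.sqrt b).
rewrite -(sqr_sqrtr b0).
by rewrite ler_sqr ?nnegrE ?sqrtr_ge0.
Qed.
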